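(* Let $(F,v)$ be a Krasner valued hyperfield with norm $\rho_v$, and let $w$ be a valuation on $F$ with $\mathcal{O}_w=\{x\in F: x-x\subseteq 1-1\}$ (such $w$ exists and is a Krasner valuation). Then $w$ is equivalent to the coarsening $v_{\mathrm{ig}(\rho_v)}$ of $v$ corresponding to the convex subgroup $\mathrm{ig}(\rho_v)$. In particular, $v_{\mathrm{ig}(\rho_v)}$ is a Krasner valuation.
   Context: A hyperfield is $(F,+,\cdot,0,1)$ with $+$ a multivalued operation making $(F,+,0)$ a canonical hypergroup (associative, commutative, unique inverses $-x$ with $0\in x+(-x)$, and $z\in x+y\Rightarrow y\in z+(-x)$; write $x-y:=x+(-y)$, $A+B:=\bigcup_{a\in A,b\in B}a+b$), $(F,\cdot)$ commutative with $0$ absorbing, $x(y+z)=xy+xz$, and $F\setminus\{0\}$ an abelian group with neutral $1\neq0$. Valuation on $F$: for an ordered abelian group $\Gamma$ and $\infty>\Gamma$ with $\gamma+\infty=\infty+\gamma=\infty$, a surjective map $v:F\to\Gamma\cup\{\infty\}$ with $vx=\infty\iff x=0$, $v(xy)=vx+vy$, $z\in x+y\Rightarrow vz\ge\min\{vx,vy\}$; $vF:=v(F\setminus\{0\})$, $\mathcal{O}_v:=\{x:vx\ge0\}$. Valuations $v_i:F\to\Gamma_i\cup\{\infty\}$ are equivalent if $v_2=\sigma\circ v_1$ for an order-preserving group isomorphism $\sigma:\Gamma_1\to\Gamma_2$ ($\sigma(\infty)=\infty$). An initial segment of $\Gamma$ is $\rho\subseteq\Gamma$ with $\delta\in\rho,\gamma<\delta\Rightarrow\gamma\in\rho$;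 $\rho+\gamma:=\{\delta+\gamma:\delta\in\rho\}$; ''$\alpha>\rho+\gamma$'' means $\alpha\notin\rho+\gamma$. The invariance group of $\rho$ is $\mathrm{ig}(\rho):=\{\gamma\in\Gamma:\rho+\gamma=\rho\}$; if $0\in\rho$ it is a convex subgroup of $\Gamma$ (a subgroup $\Delta$ with $\delta_1<\gamma<\delta_2$, $\delta_i\in\Delta\Rightarrow\gamma\in\Delta$). For a convex subgroup $\Delta$ of $vF$, $vF/\Delta$ is ordered by $x+\Delta\prec y+\Delta$ iff $x<y$ and $y-x\notin\Delta$, and the coarsening $v_\Delta:F\to(vF/\Delta)\cup\{\infty\}$, $x\mapsto vx+\Delta$, is a valuation on $F$. Krasner valuation: a valuation $v$ on $F$ such that (KVH1) for all $x,y\in F$ with $0\notin x+y$, $v(x+y)$ is a singleton; (KVH2) there is an initial segment $\rho_v$ of $vF$ with $0\in\rho_v$ (the norm) such that for all $x,y,z,t\in F$ with $z\in x+y$: $t\in x+y$ iff $vs>\rho_v+\min\{vx,vy\}$ for all $s\in z-t$. *)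

(* Defs.v *)
From Stdlib Require Import ClassicalEpsilon.

Record hyperfield := HyperField {
  hcar : Type;
  hadd : hcar -> hcar -> hcar -> Prop;  (* hadd x y t  <->  t \in x + y *)
  hneg : hcar -> hcar;
  hmul : hcar -> hcar -> hcar;
  hzero : hcar;
  hone : hcar }.

Section HF.
Variable F : hyperfield.
Local Notation T := (hcar F).

Definition is_hyperfield : Prop :=
  (forall x y : T, exists t, hadd F x y t) /\
  (forall x y z t : T, (exists u, hadd F x y u /\ hadd F u z t) <->
                       (exists u, hadd F y z u /\ hadd F x u t)) /\
  (forall x y t : T, hadd F x y t <-> hadd F y x t) /\
  (forall x t : T, hadd F x (hzero F) t <-> t = x) /\
  (forall x : T, hadd F x (hneg F x) (hzero F)) /\
  (forall x y : T, hadd F x y (hzero F) -> y = hneg F x) /\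
  (forall x y z : T, hadd F x y z -> hadd F z (hneg F x) y) /\
  (forall x y : T, hmul F x y = hmul F y x) /\
  (forall x y z : T, hmul F x (hmul F y z) = hmul F (hmul F x y) z) /\
  (forall x : T, hmul F (hone F) x = x) /\
  (forall x : T, hmul F (hzero F) x = hzero F) /\
  (forall x y z t : T, hadd F (hmul F x y) (hmul F x z) t <->
                       exists u, hadd F y z u /\ t = hmul F x u) /\
  hone F <> hzero F /\
  (forall x y : T, x <> hzero F -> y <> hzero F -> hmul F x y <> hzero F) /\
  (forall x : T, x <> hzero F -> exists y, hmul F x y = hone F).
End HF.

Record oag := OAG {
  car : Type;
  gadd : car -> car -> car;
  gopp : car -> car;
  gzero : car;
  glt : car -> car -> Prop }.

Definition is_oag (G : oag) : Prop :=
  (forall a b c : car G, gadd G a (gadd G b c) = gadd G (gadd G a b) c) /\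
  (forall a b : car G, gadd G a b = gadd G b a) /\
  (forall a : car G, gadd G a (gzero G) = a) /\
  (forall a : car G, gadd G a (gopp G a) = gzero G) /\
  (forall a : car G, ~ glt G a a) /\
  (forall a b c : car G, glt G a b -> glt G b c -> glt G a c) /\
  (forall a b : car G, glt G a b \/ a = b \/ glt G b a) /\
  (forall a b c : car G, glt G a b -> glt G (gadd G a c) (gadd G b c)).

(* Gamma \cup {oo} is modelled as option (car G), None = oo. *)
Definition olt (G : oag) (a b : option (car G)) : Prop :=
  match a, b with
  | Some a, Some b => glt G a b
  | Some _, None => True
  | None, _ => False
  end.
Definition ole (G : oag) (a b : option (car G)) : Prop := olt G a b \/ a = b.
Definition oadd (G : oag) (a b : option (car G)) : option (car G) :=
  match a, b with
  | Some a, Some b => Some (gadd G a b)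
  | _, _ => None
  end.
Definition omin (G : oag) (a b : option (car G)) : option (car G) :=
  match a, b with
  | Some a', Some b' => Some (if excluded_middle_informative (glt G b' a') then b' else a')
  | Some _, None => a
  | None, _ => b
  end.

Section Val.
Variables (F : hyperfield) (G : oag).

Definition valuation (v : hcar F -> option (car G)) : Prop :=
  (forall o : option (car G), exists x, v x = o) /\
  (forall x, v x = None <-> x = hzero F) /\
  (forall x y, v (hmul F x y) = oadd G (v x) (v y)) /\
  (forall x y z, hadd F x y z -> ole G (omin G (v x) (v y)) (v z)).

(* initial segment of vF (= the whole of G, since v is surjective) containing 0 *)
Definition initial_segment (rho : car G -> Prop) : Prop :=
  forall d g : car G, rho d -> glt G g d -> rho g.

Definition seg_shift (rho : car G -> Prop) (g : car G) : car G -> Prop :=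
  fun a => exists d, rho d /\ a = gadd G d g.

Definition ig (rho : car G -> Prop) : car G -> Prop :=
  fun g => forall a, seg_shift rho g a <-> rho a.

(* "alpha > rho + gamma" for alpha in G \cup {oo}, gamma in G: alpha \notin rho + gamma *)
Definition above_seg (rho : car G -> Prop) (alpha : option (car G)) (g : car G) : Prop :=
  match alpha with
  | None => True
  | Some a => ~ seg_shift rho g a
  end.

Definition KVH1 (v : hcar F -> option (car G)) : Prop :=
  forall x y, ~ hadd F x y (hzero F) ->
    exists g, forall t, hadd F x y t -> v t = g.

Definition krasner_norm (v : hcar F -> option (car G)) (rho : car G -> Prop) : Prop :=
  initial_segment rho /\ rho (gzero G) /\
  forall x y z t : hcar F, (x <> hzero F \/ y <> hzero F) -> hadd F x y z ->
    forall m, omin G (v x) (v y) = Some m ->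
    (hadd F x y t <-> forall s, hadd F z (hneg F t) s -> above_seg rho (v s) m).

Definition krasner_valuation_with_norm (v : hcar F -> option (car G)) (rho : car G -> Prop) :=
  valuation v /\ KVH1 v /\ krasner_norm v rho.

Definition krasner_valuation (v : hcar F -> option (car G)) : Prop :=
  valuation v /\ KVH1 v /\ exists rho, krasner_norm v rho.
End Val.

Definition val_equiv (F : hyperfield) (G1 G2 : oag)
  (v1 : hcar F -> option (car G1)) (v2 : hcar F -> option (car G2)) : Prop :=
  exists sigma : car G1 -> car G2,
    (forall a b, sigma a = sigma b -> a = b) /\
    (forall c, exists a, sigma a = c) /\
    (forall a b, sigma (gadd G1 a b) = gadd G2 (sigma a) (sigma b)) /\
    (forall a b, glt G1 a b <-> glt G2 (sigma a) (sigma b)) /\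
    (forall x, v2 x = option_map sigma (v1 x)).

Section Quot.
Variables (G : oag) (Delta : car G -> Prop).

Definition coset_of (g : car G) : car G -> Prop := fun y => Delta (gadd G y (gopp G g)).

Definition qcar : Type := {S : car G -> Prop | exists g, S = coset_of g}.

Definition qmk (g : car G) : qcar := exist _ (coset_of g) (ex_intro _ g eq_refl).

Definition qrep (S : qcar) : car G :=
  proj1_sig (constructive_indefinite_description _ (proj2_sig S)).

Definition quot_oag : oag := {|
  car := qcar;
  gadd := fun S T => qmk (gadd G (qrep S) (qrep T));
  gopp := fun S => qmk (gopp G (qrep S));
  gzero := qmk (gzero G);
  glt := fun S T => glt G (qrep S) (qrep T) /\
                    ~ Delta (gadd G (qrep T) (gopp G (qrep S))) |}.
End Quot.

Definition coarsening (F : hyperfield) (G : oag) (Delta : car G -> Prop)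
  (v : hcar F -> option (car G)) : hcar F -> option (car (quot_oag G Delta)) :=
  fun x => option_map (qmk G Delta) (v x).

(* Main.v *)
Require Import Defs.
From Stdlib Require Import ClassicalEpsilon Classical FunctionalExtensionality PropExtensionality ProofIrrelevance.

Section Grp.
Context {G : oag} (HG : is_oag G).
Local Infix "⊕" := (gadd G) (at level 50, left associativity).
Local Notation "⊝ a" := (gopp G a) (at level 35, right associativity).
Local Notation z0 := (gzero G).

Lemma addA a b c : a ⊕ (b ⊕ c) = a ⊕ b ⊕ c.
Proof. destruct HG as (A&C&Z&N&I&T&Tot&M). apply A. Qed.
Lemma addC a b : a ⊕ b = b ⊕ a.
Proof. destruct HG as (A&C&Z&N&I&T&Tot&M). apply C. Qed.
Lemma addr0 a : a ⊕ z0 = a.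
Proof. destruct HG as (A&C&Z&N&I&T&Tot&M). apply Z. Qed.
Lemma addrN a : a ⊕ ⊝a = z0.
Proof. destruct HG as (A&C&Z&N&I&T&Tot&M). apply N. Qed.
Lemma ltirr a : ~ glt G a a.
Proof. destruct HG as (A&C&Z&N&I&T&Tot&M). apply I. Qed.
Lemma lttr a b c : glt G a b -> glt G b c -> glt G a c.
Proof. destruct HG as (A&C&Z&N&I&T&Tot&M). apply T. Qed.
Lemma lttot a b : glt G a b \/ a = b \/ glt G b a.
Proof. destruct HG as (A&C&Z&N&I&T&Tot&M). apply Tot. Qed.
Lemma ltadd a b c : glt G a b -> glt G (a ⊕ c) (b ⊕ c).
Proof. destruct HG as (A&C&Z&N&I&T&Tot&M). apply M. Qed.

Lemma add0r a : z0 ⊕ a = a.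
Proof. rewrite addC; apply addr0. Qed.
Lemma addNr a : ⊝a ⊕ a = z0.
Proof. rewrite addC; apply addrN. Qed.
Lemma addK a b : a ⊕ b ⊕ ⊝b = a.
Proof. rewrite <- addA, addrN, addr0. reflexivity. Qed.
Lemma addNK a b : a ⊕ ⊝b ⊕ b = a.
Proof. rewrite <- addA, addNr, addr0. reflexivity. Qed.
Lemma addAC a b c : a ⊕ b ⊕ c = a ⊕ c ⊕ b.
Proof. rewrite <- !addA, (addC b c). reflexivity. Qed.
Lemma addCA a b c : a ⊕ (b ⊕ c) = b ⊕ (a ⊕ c).
Proof. rewrite !addA, (addC a b). reflexivity. Qed.
Lemma addACA a b c d : (a ⊕ b) ⊕ (c ⊕ d) = (a ⊕ c) ⊕ (b ⊕ d).
Proof. rewrite !addA, (addAC a b c). reflexivity. Qed.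
Lemma addIr a b c : a ⊕ c = b ⊕ c -> a = b.
Proof. intro E. rewrite <- (addK a c), E, addK. reflexivity. Qed.
Lemma opp_uniq a b : a ⊕ b = z0 -> b = ⊝a.
Proof. intro E. rewrite <- (add0r b), <- (addNr a), <- addA, E, addr0. reflexivity. Qed.
Lemma oppK a : ⊝⊝a = a.
Proof. symmetry; apply opp_uniq; apply addNr. Qed.
Lemma opp0 : ⊝z0 = z0.
Proof. symmetry; apply opp_uniq; apply addr0. Qed.
Lemma oppD a b : ⊝(a ⊕ b) = ⊝a ⊕ ⊝b.
Proof. symmetry; apply opp_uniq. rewrite addACA, !addrN, addr0. reflexivity. Qed.
Lemma opp_sub a b : ⊝(a ⊕ ⊝b) = b ⊕ ⊝a.
Proof. rewrite oppD, oppK, addC. reflexivity. Qed.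
Lemma sub_ACA a b c d : (a ⊕ ⊝b) ⊕ ⊝(c ⊕ ⊝d) = (a ⊕ ⊝c) ⊕ ⊝(b ⊕ ⊝d).
Proof. rewrite !oppD, addACA. reflexivity. Qed.
Lemma sub_trans a b c : (a ⊕ ⊝b) ⊕ (b ⊕ ⊝c) = a ⊕ ⊝c.
Proof. rewrite <- addA, (addA (⊝b)), addNr, add0r. reflexivity. Qed.
Lemma subKr a b : a ⊕ ⊝(a ⊕ ⊝b) = b.
Proof. rewrite opp_sub, addCA, addrN, addr0. reflexivity. Qed.
Lemma sub0 a : a ⊕ ⊝z0 = a.
Proof. rewrite opp0, addr0. reflexivity. Qed.

Lemma ltaddl a b c : glt G a b -> glt G (c ⊕ a) (c ⊕ b).
Proof. rewrite !(addC c); apply ltadd. Qed.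
Lemma lt_add_iff a b c : glt G (a ⊕ c) (b ⊕ c) <-> glt G a b.
Proof. split; [intro h; rewrite <- (addK a c), <- (addK b c); apply ltadd; exact h | apply ltadd]. Qed.
Lemma lt_asym a b : glt G a b -> ~ glt G b a.
Proof. intros h1 h2; exact (ltirr a (lttr _ _ _ h1 h2)). Qed.
Lemma lt_sub0 a b : glt G (a ⊕ ⊝b) z0 <-> glt G a b.
Proof. rewrite <- (lt_add_iff _ _ b), addNK, add0r. reflexivity. Qed.
Lemma lt0_sub a b : glt G z0 (a ⊕ ⊝b) <-> glt G b a.
Proof. rewrite <- (lt_add_iff _ _ b), addNK, add0r. reflexivity. Qed.
Lemma opp_pos a : glt G z0 a -> glt G (⊝a) z0.
Proof. intro h. pose proof (ltadd _ _ (⊝a) h) as g. rewrite add0r, addrN in g. exact g. Qed.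

Lemma ole_sub p q : ole G (Some q) (Some p) <-> ole G (Some z0) (Some (p ⊕ ⊝q)).
Proof.
  unfold ole; simpl. split.
  - intros [h|h]. left; apply lt0_sub; exact h.
    right. injection h as <-. rewrite addrN. reflexivity.
  - intros [h|h]. left; apply lt0_sub; exact h.
    right. injection h as h. f_equal. rewrite <- (addNK p q), <- h, add0r. reflexivity.
Qed.

Lemma ole_antisym a b : ole G a b -> ole G b a -> a = b.
Proof.
  unfold ole. intros [h1|h1] [h2|h2]; auto.
  destruct a as [a|], b as [b|]; simpl in *; try contradiction.
  exfalso; exact (lt_asym _ _ h1 h2).
Qed.

Lemma omin_same g : omin G (Some g) (Some g) = Some g.
Proof. unfold omin. destruct (excluded_middle_informative _); reflexivity. Qed.
End Grp.

Section HFs.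
Context {F : hyperfield} (HF : is_hyperfield F).
Local Notation "0" := (hzero F).
Local Notation "1" := (hone F).
Local Infix "*" := (hmul F).

Lemma h_comm x y t : hadd F x y t <-> hadd F y x t.
Proof. destruct HF as (a1&a2&a3&a4&a5&a6&a7&a8&a9&a10&a11&a12&a13&a14&a15). apply a3. Qed.
Lemma h_zero x t : hadd F x 0 t <-> t = x.
Proof. destruct HF as (a1&a2&a3&a4&a5&a6&a7&a8&a9&a10&a11&a12&a13&a14&a15). apply a4. Qed.
Lemma h_inv x : hadd F x (hneg F x) 0.
Proof. destruct HF as (a1&a2&a3&a4&a5&a6&a7&a8&a9&a10&a11&a12&a13&a14&a15). apply a5. Qed.
Lemma h_uinv x y : hadd F x y 0 -> y = hneg F x.
Proof. destruct HF as (a1&a2&a3&a4&a5&a6&a7&a8&a9&a10&a11&a12&a13&a14&a15). apply a6. Qed.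
Lemma m_comm x y : x * y = y * x.
Proof. destruct HF as (a1&a2&a3&a4&a5&a6&a7&a8&a9&a10&a11&a12&a13&a14&a15). apply a8. Qed.
Lemma m_one x : 1 * x = x.
Proof. destruct HF as (a1&a2&a3&a4&a5&a6&a7&a8&a9&a10&a11&a12&a13&a14&a15). apply a10. Qed.
Lemma m_zero x : 0 * x = 0.
Proof. destruct HF as (a1&a2&a3&a4&a5&a6&a7&a8&a9&a10&a11&a12&a13&a14&a15). apply a11. Qed.
Lemma h_distr x y z t : hadd F (x * y) (x * z) t <-> exists u, hadd F y z u /\ t = x * u.
Proof. destruct HF as (a1&a2&a3&a4&a5&a6&a7&a8&a9&a10&a11&a12&a13&a14&a15). apply a12. Qed.
Lemma one_nz : 1 <> 0.
Proof. destruct HF as (a1&a2&a3&a4&a5&a6&a7&a8&a9&a10&a11&a12&a13&a14&a15). apply a13. Qed.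
Lemma m_nz x y : x <> 0 -> y <> 0 -> x * y <> 0.
Proof. destruct HF as (a1&a2&a3&a4&a5&a6&a7&a8&a9&a10&a11&a12&a13&a14&a15). apply a14. Qed.
Lemma m_inv x : x <> 0 -> exists y, x * y = 1.
Proof. destruct HF as (a1&a2&a3&a4&a5&a6&a7&a8&a9&a10&a11&a12&a13&a14&a15). apply a15. Qed.

Lemma h_zero_l y s : hadd F 0 y s <-> s = y.
Proof. rewrite h_comm. apply h_zero. Qed.
Lemma mul0r x : x * 0 = 0.
Proof. rewrite m_comm. apply m_zero. Qed.
Lemma mulr1 x : x * 1 = x.
Proof. rewrite m_comm. apply m_one. Qed.
Lemma mul_neg1 x : x * hneg F 1 = hneg F x.
Proof.
  apply h_uinv. pose proof (proj2 (h_distr x 1 (hneg F 1) 0)) as h.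
  rewrite mulr1 in h. apply h. exists 0. split. apply h_inv. symmetry; apply mul0r.
Qed.
Lemma negneg1 : hneg F (hneg F 1) = 1.
Proof. symmetry; apply h_uinv; apply h_comm; apply h_inv. Qed.
Lemma neg1_sq : hneg F 1 * hneg F 1 = 1.
Proof. rewrite mul_neg1, negneg1. reflexivity. Qed.
Lemma neg1_nz : hneg F 1 <> 0.
Proof. intro e. pose proof (h_inv 1) as h. rewrite e in h. apply h_zero in h. apply one_nz; symmetry; exact h. Qed.
End HFs.

Section Vals.
Context {F : hyperfield} (HF : is_hyperfield F) {K : oag} (HK : is_oag K)
  {u : hcar F -> option (car K)} (Hu : valuation F K u).

Lemma u_surj o : exists x, u x = o.
Proof. apply (proj1 Hu). Qed.
Lemma u_zero x : u x = None <-> x = hzero F.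
Proof. apply (proj1 (proj2 Hu)). Qed.
Lemma u_mul x y : u (hmul F x y) = oadd K (u x) (u y).
Proof. apply (proj1 (proj2 (proj2 Hu))). Qed.
Lemma u_ultra x y z : hadd F x y z -> ole K (omin K (u x) (u y)) (u z).
Proof. apply (proj2 (proj2 (proj2 Hu))). Qed.
Lemma u0 : u (hzero F) = None.
Proof. apply u_zero; reflexivity. Qed.
Lemma u_nz x : x <> hzero F -> exists g, u x = Some g.
Proof. intro h. destruct (u x) as [g|] eqn:E. eauto. apply u_zero in E. contradiction. Qed.
Lemma u_nzs x g : u x = Some g -> x <> hzero F.
Proof. intros e h. subst. rewrite u0 in e. discriminate. Qed.

Lemma u1 : u (hone F) = Some (gzero K).
Proof.
  destruct (u_nz _ (one_nz HF)) as [g hg].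
  pose proof (u_mul (hone F) (hone F)) as e. rewrite (m_one HF), hg in e. simpl in e.
  injection e as e. rewrite hg. f_equal. apply (addIr HK _ _ g). rewrite add0r by exact HK. auto.
Qed.
Lemma uneg1 : u (hneg F (hone F)) = Some (gzero K).
Proof.
  destruct (u_nz _ (neg1_nz HF)) as [g hg].
  pose proof (u_mul (hneg F (hone F)) (hneg F (hone F))) as e.
  rewrite (neg1_sq HF), u1, hg in e. simpl in e. injection e as e.
  rewrite hg. f_equal.
  destruct (lttot HK g (gzero K)) as [h|[h|h]]; auto; exfalso.
  - pose proof (ltadd HK _ _ g h) as h2. rewrite add0r, <- e in h2 by exact HK.
    exact (lt_asym HK _ _ h h2).
  - pose proof (ltadd HK _ _ g h) as h2. rewrite add0r, <- e in h2 by exact HK.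
    exact (lt_asym HK _ _ h h2).
Qed.
Lemma uneg x : u (hneg F x) = u x.
Proof.
  rewrite <- (mul_neg1 HF), u_mul, uneg1. destruct (u x); simpl; [rewrite addr0 by exact HK|]; reflexivity.
Qed.
Lemma uinv y y' b : u y = Some b -> hmul F y y' = hone F -> u y' = Some (gopp K b).
Proof.
  intros hb e.
  assert (y' <> hzero F) as hn.
  { intro h; subst. rewrite (mul0r HF) in e. apply (one_nz HF); symmetry; exact e. }
  destruct (u_nz _ hn) as [g hg]. pose proof (u_mul y y') as m.
  rewrite e, u1, hb, hg in m. simpl in m. injection m as m. rewrite hg. f_equal.
  apply (opp_uniq HK). auto.
Qed.
End Vals.

Section Main.
Variables (F : hyperfield) (HF : is_hyperfield F) (G : oag) (HG : is_oag G)
  (v : hcar F -> option (car G)) (rho : car G -> Prop)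
  (Hv : krasner_valuation_with_norm F G v rho)
  (H : oag) (HH : is_oag H) (w : hcar F -> option (car H)) (Hw : valuation F H w)
  (HOw : forall x : hcar F,
      ole H (Some (gzero H)) (w x) <->
      (forall s, hadd F x (hneg F x) s -> hadd F (hone F) (hneg F (hone F)) s)).

Local Infix "⊕" := (gadd G) (at level 50, left associativity).
Local Notation "⊝ a" := (gopp G a) (at level 35, right associativity).
Local Notation z0 := (gzero G).

Let vval : valuation F G v := proj1 Hv.
Let vK1 : KVH1 F G v := proj1 (proj2 Hv).
Let Hinit : initial_segment G rho := proj1 (proj2 (proj2 Hv)).
Let Hr0 : rho z0 := proj1 (proj2 (proj2 (proj2 Hv))).
Let HK2 := proj2 (proj2 (proj2 (proj2 Hv))).

Definition Qp g := forall c, rho c -> rho (c ⊕ ⊝g).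
Definition I := ig G rho.
Definition Eqv a b := I (a ⊕ ⊝b).
Definition Lt a b := glt G a b /\ ~ I (b ⊕ ⊝a).

Lemma seg_shift_iff g a : seg_shift G rho g a <-> rho (a ⊕ ⊝g).
Proof.
  split.
  - intros [d [hd ->]]. rewrite (addK HG). exact hd.
  - intro h. exists (a ⊕ ⊝g). split; [exact h| rewrite (addNK HG); reflexivity].
Qed.

Lemma ig_iff g : I g <-> forall c, rho (c ⊕ ⊝g) <-> rho c.
Proof.
  unfold I, ig. split; intros h c.
  - rewrite <- seg_shift_iff; apply h.
  - rewrite seg_shift_iff; apply h.
Qed.

Lemma ig_Q g : I g <-> Qp g /\ Qp (⊝g).
Proof.
  rewrite ig_iff. split.
  - intro h. split; intros c hc.
    + apply h; exact hc.
    + rewrite (oppK HG). rewrite <- (h (c ⊕ g)), (addK HG). exact hc.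
  - intros [h1 h2] c. split; intro hc.
    + pose proof (h2 _ hc) as e. rewrite (oppK HG), (addNK HG) in e. exact e.
    + apply h1; exact hc.
Qed.

Lemma Q_D a b : Qp a -> Qp b -> Qp (a ⊕ b).
Proof. intros ha hb c hc. rewrite (oppD HG), (addA HG). apply hb, ha, hc. Qed.

Lemma I0 : I z0.
Proof. apply ig_Q. rewrite (opp0 HG). assert (Qp z0) by (intros c hc; rewrite (sub0 HG); exact hc). tauto. Qed.
Lemma IN g : I g -> I (⊝g).
Proof. rewrite !ig_Q, (oppK HG). tauto. Qed.
Lemma ID a b : I a -> I b -> I (a ⊕ b).
Proof. rewrite !ig_Q, (oppD HG). intros [] []. split; apply Q_D; assumption. Qed.

Lemma Eqv_refl a : Eqv a a.
Proof. unfold Eqv. rewrite (addrN HG). apply I0. Qed.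
Lemma Eqv_sym a b : Eqv a b -> Eqv b a.
Proof. unfold Eqv. intro h. rewrite <- (opp_sub HG). apply IN, h. Qed.
Lemma Eqv_trans a b c : Eqv a b -> Eqv b c -> Eqv a c.
Proof. unfold Eqv. intros h1 h2. rewrite <- (sub_trans HG a b c). apply ID; assumption. Qed.

Lemma Q_nonneg g : ~ glt G g z0 -> Qp g.
Proof.
  intros h c hc. destruct (lttot HG g z0) as [h1|[h1|h1]].
  - contradiction.
  - subst. rewrite (sub0 HG). exact hc.
  - apply (Hinit c); [exact hc|]. pose proof (ltaddl HG _ _ c (opp_pos HG _ h1)) as g1.
    rewrite (addr0 HG) in g1. exact g1.
Qed.

Lemma Lt_notQ a b : Lt a b <-> ~ Qp (a ⊕ ⊝b).
Proof.
  unfold Lt. split.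
  - intros [h1 h2] hq. apply h2. apply Eqv_sym. apply ig_Q. split; [exact hq|].
    apply Q_nonneg. apply (lt_asym HG). rewrite (opp_sub HG). apply (lt0_sub HG). exact h1.
  - intro hn. split.
    + apply (lt_sub0 HG). apply NNPP. intro h. apply hn. apply Q_nonneg. exact h.
    + intro hi. apply hn. apply Eqv_sym in hi. apply ig_Q in hi. apply hi.
Qed.

Lemma Q_E x y : Eqv x y -> Qp x -> Qp y.
Proof.
  intros e hx. apply Eqv_sym in e. apply ig_Q in e.
  rewrite <- (addr0 HG y), <- (addrN HG x), (addCA HG). apply Q_D; [exact hx| apply e].
Qed.

Lemma Lt_congr r a s b : Eqv r a -> Eqv s b -> (Lt a b <-> Lt r s).
Proof.
  intros h1 h2. rewrite !Lt_notQ.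
  assert (E : Eqv (r ⊕ ⊝s) (a ⊕ ⊝b)).
  { unfold Eqv. rewrite (sub_ACA HG). apply ID; [exact h1| apply IN; exact h2]. }
  split; intros hn hq; apply hn.
  - exact (Q_E _ _ E hq).
  - exact (Q_E _ _ (Eqv_sym _ _ E) hq).
Qed.

Lemma rho_E x y : Eqv x y -> rho x -> rho y.
Proof.
  intros e hx. unfold Eqv in e. rewrite ig_iff in e. apply (proj2 (e x)) in hx. rewrite (subKr HG) in hx. exact hx.
Qed.

Local Notation Qt := (quot_oag G I).
Local Notation qmk := (qmk G I).
Local Notation qrep := (qrep G I).

Lemma qmk_eq a b : qmk a = qmk b <-> Eqv a b.
Proof.
  split.
  - intro e. pose proof (f_equal (@proj1_sig _ _) e) as e2. simpl in e2.
    pose proof (equal_f e2 a) as e3. unfold coset_of in e3.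
    assert (I (a ⊕ ⊝a)) as h by (rewrite (addrN HG); apply I0).
    rewrite e3 in h. exact h.
  - intro e. apply eq_sig_hprop; [intros; apply proof_irrelevance|]. simpl.
    unfold coset_of. apply functional_extensionality. intro y. apply propositional_extensionality.
    split; intro h.
    + exact (Eqv_trans _ _ _ h e).
    + exact (Eqv_trans _ _ _ h (Eqv_sym _ _ e)).
Qed.

Lemma qrep_spec S : proj1_sig S = coset_of G I (qrep S).
Proof.
  unfold Defs.qrep. destruct (constructive_indefinite_description _ _) as [g hg]. simpl. exact hg.
Qed.

Lemma qmk_qrep S : qmk (qrep S) = S.
Proof.
  apply eq_sig_hprop; [intros; apply proof_irrelevance|]. simpl. symmetry; apply qrep_spec.
Qed.

Lemma qrep_qmk a : Eqv (qrep (qmk a)) a.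
Proof.
  pose proof (qrep_spec (qmk a)) as e. simpl in e.
  pose proof (equal_f e a) as e3. unfold coset_of in e3.
  apply Eqv_sym. unfold Eqv. rewrite <- e3. rewrite (addrN HG); apply I0.
Qed.

Lemma qadd_qmk a b : gadd Qt (qmk a) (qmk b) = qmk (a ⊕ b).
Proof.
  change (qmk (qrep (qmk a) ⊕ qrep (qmk b)) = qmk (a ⊕ b)). apply qmk_eq.
  unfold Eqv. rewrite (oppD HG), (addACA HG). apply ID; apply qrep_qmk.
Qed.

Lemma qlt_qmk a b : glt Qt (qmk a) (qmk b) <-> Lt a b.
Proof.
  change (Lt (qrep (qmk a)) (qrep (qmk b)) <-> Lt a b). symmetry; apply Lt_congr; apply qrep_qmk.
Qed.

Lemma above_Some a g : above_seg G rho (Some a) g <-> ~ rho (a ⊕ ⊝g).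
Proof. simpl. rewrite seg_shift_iff. reflexivity. Qed.

Lemma xx_char x g : x <> hzero F -> v x = Some g ->
  forall t, hadd F x (hneg F x) t <-> above_seg G rho (v t) g.
Proof.
  intros hx hg t.
  assert (hm : omin G (v x) (v (hneg F x)) = Some g).
  { rewrite (uneg HF HG vval), hg. apply omin_same. }
  rewrite (HK2 x (hneg F x) (hzero F) t (or_introl hx) (h_inv HF x) g hm).
  split.
  - intro h. rewrite <- (uneg HF HG vval t). apply h. apply (h_zero_l HF). reflexivity.
  - intros h s hs. apply (h_zero_l HF) in hs. subst. rewrite (uneg HF HG vval). exact h.
Qed.

Lemma O_w_char x g : x <> hzero F -> v x = Some g ->
  (ole H (Some (gzero H)) (w x) <-> Qp g).
Proof.
  intros hx hg. rewrite HOw.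
  pose proof (u1 HF HG vval) as v1.
  split.
  - intros h c hc. apply NNPP; intro hn.
    destruct (u_surj vval (Some c)) as [t ht].
    assert (A : hadd F x (hneg F x) t).
    { rewrite (xx_char x g hx hg), ht, above_Some. exact hn. }
    specialize (h t A). rewrite (xx_char _ _ (one_nz HF) v1), ht, above_Some in h.
    apply h. rewrite (sub0 HG). exact hc.
  - intros hq s hs. rewrite (xx_char x g hx hg) in hs.
    rewrite (xx_char _ _ (one_nz HF) v1).
    destruct (v s) as [a|]; [|exact hs].
    rewrite above_Some in *. intro hr. apply hs. apply hq. rewrite (sub0 HG) in hr. exact hr.
Qed.

Lemma L1 x y a b : x <> hzero F -> y <> hzero F -> v x = Some a -> v y = Some b ->
  (ole H (w y) (w x) <-> Qp (a ⊕ ⊝b)).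
Proof.
  intros hx hy ha hb.
  destruct (m_inv HF y hy) as [y' hy'].
  assert (vz : v (hmul F x y') = Some (a ⊕ ⊝b)).
  { rewrite (u_mul vval), ha, (uinv HF HG vval y y' b hb hy'). reflexivity. }
  rewrite <- (O_w_char _ _ (u_nzs vval _ _ vz) vz).
  destruct (u_nz Hw x hx) as [p hp], (u_nz Hw y hy) as [q hq].
  rewrite (u_mul Hw), hp, (uinv HF HH Hw y y' q hq hy'), hq. simpl.
  apply (ole_sub HH).
Qed.

Definition xw (h : car H) : hcar F :=
  proj1_sig (constructive_indefinite_description _ (u_surj Hw (Some h))).
Lemma xw_spec h : w (xw h) = Some h.
Proof. unfold xw. destruct (constructive_indefinite_description _ _) as [x hx]. exact hx. Qed.

Definition sig (h : car H) : car Qt :=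
  match v (xw h) with Some g => qmk g | None => qmk z0 end.

Lemma sig_key x h g : w x = Some h -> v x = Some g -> sig h = qmk g.
Proof.
  intros hw hv. unfold sig.
  pose proof (xw_spec h) as hxh.
  pose proof (u_nzs Hw _ _ hxh) as nxh.
  pose proof (u_nzs Hw _ _ hw) as nx.
  destruct (u_nz vval _ nxh) as [g0 hg0]. rewrite hg0. apply qmk_eq.
  unfold Eqv. apply ig_Q. rewrite (opp_sub HG). split.
  - apply (L1 _ _ _ _ nxh nx hg0 hv). rewrite hw, hxh. right; reflexivity.
  - apply (L1 _ _ _ _ nx nxh hv hg0). rewrite hw, hxh. right; reflexivity.
Qed.

Lemma sig_eq_w x y h1 h2 a b : w x = Some h1 -> w y = Some h2 -> v x = Some a -> v y = Some b ->
  Eqv a b -> h1 = h2.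
Proof.
  intros hx hy ha hb e. unfold Eqv in e. apply ig_Q in e. rewrite (opp_sub HG) in e.
  pose proof (u_nzs Hw _ _ hx) as nx. pose proof (u_nzs Hw _ _ hy) as ny.
  assert (Some h1 = Some h2) as E.
  { rewrite <- hx, <- hy. apply (ole_antisym HH).
    - apply (L1 _ _ _ _ ny nx hb ha). apply e.
    - apply (L1 _ _ _ _ nx ny ha hb). apply e. }
  injection E; auto.
Qed.

Lemma part1 : val_equiv F H Qt w (coarsening F G I v).
Proof.
  exists sig. split; [|split; [|split; [|split]]].
  - intros h1 h2 e.
    pose proof (xw_spec h1) as w1. pose proof (xw_spec h2) as w2.
    destruct (u_nz vval _ (u_nzs Hw _ _ w1)) as [a1 ha1].
    destruct (u_nz vval _ (u_nzs Hw _ _ w2)) as [a2 ha2].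
    rewrite (sig_key _ _ _ w1 ha1), (sig_key _ _ _ w2 ha2) in e.
    apply qmk_eq in e. exact (sig_eq_w _ _ _ _ _ _ w1 w2 ha1 ha2 e).
  - intro c. destruct (u_surj vval (Some (qrep c))) as [x hx].
    destruct (u_nz Hw x (u_nzs vval _ _ hx)) as [h hh].
    exists h. rewrite (sig_key _ _ _ hh hx). apply qmk_qrep.
  - intros h1 h2.
    pose proof (xw_spec h1) as w1. pose proof (xw_spec h2) as w2.
    destruct (u_nz vval _ (u_nzs Hw _ _ w1)) as [a1 ha1].
    destruct (u_nz vval _ (u_nzs Hw _ _ w2)) as [a2 ha2].
    assert (wm : w (hmul F (xw h1) (xw h2)) = Some (gadd H h1 h2)).
    { rewrite (u_mul Hw), w1, w2. reflexivity. }
    assert (vm : v (hmul F (xw h1) (xw h2)) = Some (a1 ⊕ a2)).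
    { rewrite (u_mul vval), ha1, ha2. reflexivity. }
    rewrite (sig_key _ _ _ wm vm), (sig_key _ _ _ w1 ha1), (sig_key _ _ _ w2 ha2), qadd_qmk.
    reflexivity.
  - intros h1 h2.
    pose proof (xw_spec h1) as w1. pose proof (xw_spec h2) as w2.
    pose proof (u_nzs Hw _ _ w1) as n1. pose proof (u_nzs Hw _ _ w2) as n2.
    destruct (u_nz vval _ n1) as [a1 ha1].
    destruct (u_nz vval _ n2) as [a2 ha2].
    rewrite (sig_key _ _ _ w1 ha1), (sig_key _ _ _ w2 ha2), qlt_qmk, Lt_notQ,
      <- (L1 _ _ _ _ n1 n2 ha1 ha2), w1, w2.
    unfold ole; simpl. split.
    + intros h [h'|h']. exact (lt_asym HH _ _ h h'). injection h' as ->. exact (ltirr HH _ h).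
    + intro hn. destruct (lttot HH h1 h2) as [h|[h|h]]; [exact h| |]; exfalso; apply hn.
      * right; subst; reflexivity.
      * left; exact h.
  - intro x. unfold coarsening. destruct (classic (x = hzero F)) as [e|e].
    + subst. rewrite (u0 vval), (u0 Hw). reflexivity.
    + destruct (u_nz vval x e) as [a ha], (u_nz Hw x e) as [h hh].
      rewrite ha, hh. simpl. f_equal. symmetry. exact (sig_key x h a hh ha).
Qed.

Lemma omin_map a b : omin Qt (option_map qmk a) (option_map qmk b) = option_map qmk (omin G a b).
Proof.
  destruct a as [a|], b as [b|]; cbv beta iota delta [omin option_map]; try reflexivity.
  f_equal.
  destruct (excluded_middle_informative (glt Qt (qmk b) (qmk a))) as [h1|h1];
  destruct (excluded_middle_informative (glt G b a)) as [h2|h2]; try reflexivity.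
  - apply (proj1 (qlt_qmk b a)) in h1. destruct h1; contradiction.
  - apply qmk_eq. apply NNPP. intro hn. apply h1. apply qlt_qmk. split; assumption.
Qed.

Lemma mono a b : ole G a b -> ole Qt (option_map qmk a) (option_map qmk b).
Proof.
  intros [h|h]; [|subst; right; reflexivity].
  destruct a as [a|], b as [b|]; simpl in h; try contradiction.
  - destruct (classic (I (b ⊕ ⊝a))) as [hi|hi].
    + right. simpl. f_equal. apply qmk_eq. apply Eqv_sym. exact hi.
    + left. exact (proj2 (qlt_qmk a b) (conj h hi)).
  - left. exact Logic.I.
Qed.

Definition rhoQ (S : car Qt) : Prop := rho (qrep S).

Lemma seg_Q m a : seg_shift Qt rhoQ (qmk m) (qmk a) <-> rho (a ⊕ ⊝m).
Proof.
  split.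
  - intros [D [hD e]]. rewrite <- (qmk_qrep D) in e. rewrite qadd_qmk in e.
    apply qmk_eq in e. apply (rho_E (qrep D)); [|exact hD].
    apply Eqv_sym. unfold Eqv in *. rewrite (addAC HG), <- (addA HG), <- (oppD HG). exact e.
  - intro h. exists (qmk (a ⊕ ⊝m)). split.
    + unfold rhoQ. apply (rho_E (a ⊕ ⊝m)); [|exact h]. apply Eqv_sym, qrep_qmk.
    + rewrite qadd_qmk, (addNK HG). reflexivity.
Qed.

Lemma above_Q o m : above_seg G rho o m <-> above_seg Qt rhoQ (option_map qmk o) (qmk m).
Proof.
  destruct o as [a|].
  - change (~ seg_shift G rho m a <-> ~ seg_shift Qt rhoQ (qmk m) (qmk a)).
    rewrite seg_shift_iff, seg_Q. reflexivity.
  - simpl. tauto.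
Qed.

Lemma part2 : krasner_valuation F Qt (coarsening F G I v).
Proof.
  split; [|split].
  - split; [|split; [|split]].
    + intros [S|].
      * destruct (u_surj vval (Some (qrep S))) as [x hx]. exists x.
        unfold coarsening. rewrite hx. simpl. rewrite qmk_qrep. reflexivity.
      * exists (hzero F). unfold coarsening. rewrite (u0 vval). reflexivity.
    + intro x. unfold coarsening. rewrite <- (u_zero vval x).
      destruct (v x); simpl; split; congruence.
    + intros x y. unfold coarsening. rewrite (u_mul vval).
      destruct (v x) as [a|], (v y) as [b|]; cbv beta iota delta [oadd option_map]; try reflexivity.
      rewrite qadd_qmk. reflexivity.
    + intros x y z hz. unfold coarsening. rewrite omin_map. apply mono.
      exact (u_ultra vval x y z hz).
  - intros x y hn. destruct (vK1 x y hn) as [g hg].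
    exists (option_map qmk g). intros t ht. unfold coarsening. rewrite (hg t ht). reflexivity.
  - exists rhoQ. split; [|split].
    + intros D T hD hlt. unfold rhoQ in *. destruct hlt as [hlt _]. exact (Hinit _ _ hD hlt).
    + unfold rhoQ. apply (rho_E z0); [|exact Hr0]. apply Eqv_sym, qrep_qmk.
    + intros x y z t hne hz M hM. unfold coarsening in hM. rewrite omin_map in hM.
      destruct (omin G (v x) (v y)) as [m|] eqn:Em; [|discriminate].
      simpl in hM. injection hM as <-.
      rewrite (HK2 x y z t hne hz m Em). unfold coarsening.
      split; intros h s hs; specialize (h s hs); [apply above_Q | apply above_Q in h]; exact h.
Qed.
End Main.

Theorem theorem6p2
  (F : hyperfield) (HF : is_hyperfield F)
  (G : oag) (HG : is_oag G)
  (v : hcar F -> option (car G)) (rho : car G -> Prop)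
  (Hv : krasner_valuation_with_norm F G v rho)
  (H : oag) (HH : is_oag H)
  (w : hcar F -> option (car H)) (Hw : valuation F H w)
  (HOw : forall x : hcar F,
      ole H (Some (gzero H)) (w x) <->
      (forall s, hadd F x (hneg F x) s -> hadd F (hone F) (hneg F (hone F)) s)) :
  val_equiv F H (quot_oag G (ig G rho)) w (coarsening F G (ig G rho) v) /\
  krasner_valuation F (quot_oag G (ig G rho)) (coarsening F G (ig G rho) v).
Proof.
  split.
  - eapply part1; eassumption.
  - eapply part2; eassumption.
Qed.
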